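(* Let $f(x)=\sum_{i=0}^{n-1}a_ix^{q^i}\in\mathbb{F}_{q^n}[x]$ and let $A$ be its Dickson matrix. If $A$ is reducible, then $f$ is $\mathbb{F}_{q^d}$-linear for some divisor $d>1$ of $n$.
   Context: The Dickson matrix of $f$ is the $n\times n$ matrix indexed by $\mathbb{Z}_n$ with $A[i|j]=a_{j-i}^{q^i}$ (indices mod $n$). An $n\times n$ matrix $A$ is reducible if there is a partition $\{\alpha,\beta\}$ of $\mathbb{Z}_n$ into nonempty sets with $A[\alpha|\beta]$ the zero matrix ($A[\alpha|\beta]$ = submatrix with rows $\alpha$, columns $\beta$). *)

(* Defs.v *)
From HB Require Import structures.
From mathcomp Require Import all_boot all_order all_algebra all_field.
Set Implicit Arguments. Unset Strict Implicit. Unset Printing Implicit Defensive.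
Import GRing.Theory.
Local Open Scope ring_scope.

(* Indices in Z_n are represented by 'I_n; subtraction mod n. *)
Lemma ord_gt0 n (i : 'I_n) : (0 < n)%N.
Proof. exact: leq_ltn_trans (leq0n i) (ltn_ord i). Qed.

Definition ord_sub n (j i : 'I_n) : 'I_n :=
  Ordinal (ltn_pmod (j + (n - i))%N (ord_gt0 i)).

Definition linpoly_fun (F : fieldType) (q n : nat) (a : 'I_n -> F) (x : F) : F :=
  \sum_(i < n) a i * x ^+ (q ^ i).

Definition dickson_mx (F : fieldType) (q n : nat) (a : 'I_n -> F) : 'M[F]_n :=
  \matrix_(i < n, j < n) (a (ord_sub j i)) ^+ (q ^ i).

Definition reducible_mx (F : fieldType) n (A : 'M[F]_n) : Prop :=
  exists alpha beta : {set 'I_n},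
    [/\ alpha != set0, beta != set0, alpha :&: beta = set0,
        alpha :|: beta = setT &
        forall i j, i \in alpha -> j \in beta -> A i j = 0].

Definition subfield_q (F : fieldType) (q d : nat) (lam : F) : Prop :=
  lam ^+ (q ^ d) = lam.

Definition Fqd_linear (F : fieldType) (q d : nat) (f : F -> F) : Prop :=
  forall lam x, subfield_q q d lam -> f (lam * x) = lam * f x.

(* Main.v *)
Require Import Defs.
From HB Require Import structures.
From mathcomp Require Import all_boot all_order all_algebra all_field.
From mathcomp Require Import zify.
Local Open Scope ring_scope.
Import GRing.Theory.

Theorem mainTheorem8 (F : finFieldType) (q n : nat)
  (hq : (1 < q)%N) (hn : (0 < n)%N) (hF : #|F| = (q ^ n)%N)
  (a : 'I_n -> F) :
  reducible_mx (dickson_mx q a) ->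
  exists d : nat, [/\ (1 < d)%N, (d %| n)%N & Fqd_linear q d (linpoly_fun q a)].
Proof.
case=> al [be [al0 be0 albe0 albeT Hz]].
pose sh (i : 'I_n) (m : nat) : 'I_n := Ordinal (ltn_pmod (i + m) hn).
pose G (m : nat) := [forall i, (i \in al) ==> (sh i m \in al)].
have GP m : reflect (forall i, i \in al -> sh i m \in al) (G m).
  by apply: (iffP forallP) => H i; [move=> ?; exact: (implyP (H i)) | apply/implyP; apply: H].
have shD i x y : sh (sh i x) y = sh i (x + y)%N.
  by apply: val_inj => /=; rewrite modnDml addnA.
have GD x y : G x -> G y -> G (x + y)%N.
  move=> /GP Gx /GP Gy; apply/GP => i Hi; rewrite -shD; exact/Gy/Gx.
have G0 : G 0%N.
  apply/GP => i Hi; suff -> : sh i 0%N = i by [].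
  by apply: val_inj => /=; rewrite addn0 modn_small.
have GM c x : G x -> G (c * x)%N.
  move=> Gx; elim: c => [|c IH].
    apply/GP => i Hi; suff -> : sh i (0 * x)%N = i by [].
    by apply: val_inj => /=; rewrite mul0n addn0 modn_small.
  by rewrite mulSn; apply: GD.
have Gmod x c : G (x + c * n)%N = G x.
  have E i : sh i (x + c * n)%N = sh i x.
    by apply: val_inj => /=; rewrite addnA addnC modnMDl.
  by apply: eq_forallb => i; rewrite E.
have Gn : G n.
  have := Gmod 0%N 1%N; rewrite add0n mul1n => ->.
  exact: G0.
have Ga (k : 'I_n) : a k != 0 -> G k.
  move=> ak; apply/GP => i Hi.
  have : sh i k \in al :|: be by rewrite albeT inE.
  rewrite inE => /orP [//|Hb].
  have := Hz _ _ Hi Hb; rewrite /dickson_mx mxE.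
  have -> : ord_sub (sh i k) i = k.
    apply: val_inj => /=; rewrite modnDml -addnA (addnC k) addnA subnKC; last exact: ltnW.
    by rewrite modnDl modn_small.
  by move/eqP; rewrite expf_eq0 (negbTE ak) andbF.
have exP : exists m, (0 < m)%N && G m by exists n; rewrite hn Gn.
case: (ex_minnP exP) => d /andP [d0 Gd] dmin.
have dvdG m : G m -> (d %| m)%N.
  move=> Gm; rewrite /dvdn; apply/negPn/negP => r0.
  have : (d <= m %% d)%N.
    apply: dmin; rewrite lt0n r0 /=.
    have := GD _ _ Gm (GM ((m %/ d) * n.-1)%N _ Gd).
    have E : (m + m %/ d * n.-1 * d = m %% d + (m %/ d * d) * n)%N.
      have e := divn_eq m d; have en := prednK hn.
      move: (m %/ d)%N (m %% d)%N (n.-1) e en => A r n' -> <-; nia.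
    by rewrite E Gmod.
  by rewrite leqNgt ltn_pmod.
exists d; split.
- rewrite ltn_neqAle eq_sym d0 andbT; apply/negP => /eqP d1.
  have Gall m : G m.
    elim: m => [|m IH]; first exact: G0.
    by rewrite -addn1; apply: GD => //; rewrite -d1.
  case/set0Pn: al0 => i0 Hi0; case/set0Pn: be0 => j Hj.
  have : sh i0 (j + (n - i0))%N \in al by exact: (elimT (GP _) (Gall (j + (n - i0))%N) _ Hi0).
  have -> : sh i0 (j + (n - i0))%N = j.
    apply: val_inj => /=; rewrite addnCA subnKC; last exact: ltnW.
    by rewrite addnC modnDl modn_small.
  move=> Hja; have : j \in al :&: be by rewrite inE Hja Hj.
  by rewrite albe0 inE.
- exact: dvdG.
- move=> lam x Hlam; rewrite /linpoly_fun mulr_sumr; apply: eq_bigr => i _.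
  have [->|ai] := eqVneq (a i) 0; first by rewrite !mul0r mulr0.
  have /dvdnP [c ->] := dvdG _ (Ga _ ai).
  have Hl : lam ^+ (q ^ (c * d)) = lam.
    elim: c => [|c IH]; first by rewrite mul0n expn0 expr1.
    by rewrite mulSn expnD exprM Hlam.
  by rewrite exprMn Hl mulrCA mulrA.
Qed.
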